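(* Let $X$ be any topological space with basepoint $\ast\in X$, and let $H$ be an open subgroup of the free Graev topological group $F_G(X,\ast)$. Then $H$ (with the subspace topology) is isomorphic, as a topological group, to a free Graev topological group $F_G(Z,z_0)$ for some based space $(Z,z_0)$.
   Context: No separation axioms are assumed on $X$. The free Graev topological group on a based space $(X,\ast)$ is the topological group $F_G(X,\ast)$ together with a continuous map $\sigma_\ast:X\to F_G(X,\ast)$ with $\sigma_\ast(\ast)=e$ (the identity), universal in the sense that every continuous map $f:X\to G$ into a topological group $G$ with $f(\ast)=e$ induces a unique continuous homomorphism $\tilde f:F_G(X,\ast)\to G$ with $\tilde f\sigma_\ast=f$. Algebraically it is the free group on $X\setminus\{\ast\}$. *)

(* Defs.v *)
Set Implicit Arguments.

Record topology (X : Type) : Type := Topology {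
  open : (X -> Prop) -> Prop;
  open_full : open (fun _ => True);
  open_inter : forall U V, open U -> open V -> open (fun x => U x /\ V x);
  open_union : forall F : (X -> Prop) -> Prop,
      (forall U, F U -> open U) -> open (fun x => exists U, F U /\ U x)
}.

Definition continuous {X Y : Type} (tX : topology X) (tY : topology Y)
  (f : X -> Y) : Prop :=
  forall V, open tY V -> open tX (fun x => V (f x)).

Definition prod_open {X Y : Type} (tX : topology X) (tY : topology Y)
  (W : X * Y -> Prop) : Prop :=
  forall p, W p -> exists A B, open tX A /\ open tY B /\ A (fst p) /\ B (snd p)
    /\ forall x y, A x -> B y -> W (x, y).

Record topgroup : Type := TopGroup {
  tg_car :> Type;
  tg_mul : tg_car -> tg_car -> tg_car;
  tg_inv : tg_car -> tg_car;
  tg_one : tg_car;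
  tg_top : topology tg_car;
  tg_assoc : forall x y z, tg_mul x (tg_mul y z) = tg_mul (tg_mul x y) z;
  tg_mul1g : forall x, tg_mul tg_one x = x;
  tg_mulg1 : forall x, tg_mul x tg_one = x;
  tg_mulVg : forall x, tg_mul (tg_inv x) x = tg_one;
  tg_mulgV : forall x, tg_mul x (tg_inv x) = tg_one;
  tg_mul_cont : forall W, open tg_top W ->
      prod_open tg_top tg_top (fun p => W (tg_mul (fst p) (snd p)));
  tg_inv_cont : continuous tg_top tg_top tg_inv
}.

Definition is_hom (G K : topgroup) (f : G -> K) : Prop :=
  forall x y, f (tg_mul G x y) = tg_mul K (f x) (f y).

Definition is_free_graev (X : Type) (tX : topology X) (x0 : X)
  (G : topgroup) (sigma : X -> G) : Prop :=
  continuous tX (tg_top G) sigma /\ sigma x0 = tg_one G /\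
  forall (K : topgroup) (f : X -> K),
    continuous tX (tg_top K) f -> f x0 = tg_one K ->
    exists g : G -> K,
      is_hom G K g /\ continuous (tg_top G) (tg_top K) g /\
      (forall x, g (sigma x) = f x) /\
      (forall g' : G -> K, is_hom G K g' -> continuous (tg_top G) (tg_top K) g' ->
         (forall x, g' (sigma x) = f x) -> forall y, g' y = g y).

Definition open_subgroup (G : topgroup) (H : G -> Prop) : Prop :=
  open (tg_top G) H /\ H (tg_one G) /\
  (forall x y, H x -> H y -> H (tg_mul G x y)) /\
  (forall x, H x -> H (tg_inv G x)).

Definition topgroup_iso_onto (K G : topgroup) (H : G -> Prop) (phi : K -> G) : Prop :=
  is_hom K G phi /\
  (forall a b, phi a = phi b -> a = b) /\
  (forall y, H y <-> exists k, phi k = y) /\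
  continuous (tg_top K) (tg_top G) phi /\
  (forall U, open (tg_top K) U ->
     exists V, open (tg_top G) V /\ forall k, U k <-> V (phi k)).

(* Main.v *)
Require Import Defs.
From Stdlib Require Import FunctionalExtensionality PropExtensionality ProofIrrelevance ClassicalEpsilon Classical Arith Lia.

Notation "x *g y" := (tg_mul _ x y) (at level 40, left associativity).
Notation iv := (tg_inv _).
Notation e1 := (tg_one _).

Section Grp.
Variable G : topgroup.
Implicit Types a b c : G.

Lemma gA a b c : a *g (b *g c) = a *g b *g c. Proof. apply tg_assoc. Qed.
Lemma g1l a : e1 *g a = a. Proof. apply tg_mul1g. Qed.
Lemma g1r a : a *g e1 = a. Proof. apply tg_mulg1. Qed.
Lemma gVl a : iv a *g a = e1. Proof. apply tg_mulVg. Qed.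
Lemma gVr a : a *g iv a = e1. Proof. apply tg_mulgV. Qed.

Lemma gcancel_l a b c : a *g b = a *g c -> b = c.
Proof. intros E. rewrite <- (g1l b), <- (g1l c), <- (gVl a), <- !gA, E. reflexivity. Qed.

Lemma gKl a b : iv a *g (a *g b) = b. Proof. rewrite gA, gVl, g1l. reflexivity. Qed.
Lemma gKr a b : a *g b *g iv b = a. Proof. rewrite <- gA, gVr, g1r. reflexivity. Qed.
Lemma gKr' a b : a *g iv b *g b = a. Proof. rewrite <- gA, gVl, g1r. reflexivity. Qed.

Lemma inv_uniq a b : a *g b = e1 -> b = iv a.
Proof. intros E. apply (gcancel_l a). rewrite E, gVr. reflexivity. Qed.
Lemma inv_inv a : iv (iv a) = a.
Proof. symmetry. apply inv_uniq. apply gVl. Qed.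
Lemma inv_mul a b : iv (a *g b) = iv b *g iv a.
Proof. symmetry. apply inv_uniq. rewrite gA, <- (gA a b), gVr, g1r, gVr. reflexivity. Qed.
Lemma inv_one : iv (e1 : G) = e1.
Proof. symmetry. apply inv_uniq. apply g1l. Qed.
Lemma idem_one a : a *g a = a -> a = e1.
Proof. intros E. apply (gcancel_l a). rewrite E, g1r. reflexivity. Qed.
Lemma left_one a b : a *g b = b -> a = e1.
Proof. intros E. rewrite <- (gKr a b), E, gVr. reflexivity. Qed.
End Grp.

Lemma open_ext {X} (t : topology X) (U V : X -> Prop) :
  (forall x, U x <-> V x) -> open t U -> open t V.
Proof.
  intros E HU. replace V with U; auto.
  apply functional_extensionality; intros x; apply propositional_extensionality; auto.
Qed.

Lemma open_local {X} (t : topology X) (U : X -> Prop) :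
  (forall x, U x -> exists O, open t O /\ O x /\ forall y, O y -> U y) -> open t U.
Proof.
  intros HL.
  apply (open_ext t (fun x => exists O, (open t O /\ forall y, O y -> U y) /\ O x)).
  - intros x; split.
    + intros [O [[_ HO] Ox]]; auto.
    + intros Ux. destruct (HL x Ux) as [O [? [? ?]]]. exists O; auto.
  - apply open_union. intros O [? _]; auto.
Qed.

Lemma open_lmul (G : topgroup) (c : G) V : open (tg_top G) V -> open (tg_top G) (fun x => V (c *g x)).
Proof.
  intros HV. apply open_local. intros x Vx.
  destruct (tg_mul_cont G V HV (c, x) Vx) as [A [B [HA [HB [Ac [Bx HAB]]]]]].
  exists B; repeat split; auto. intros y By. apply (HAB c y Ac By).
Qed.

Lemma open_rmul (G : topgroup) (c : G) V : open (tg_top G) V -> open (tg_top G) (fun x => V (x *g c)).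
Proof.
  intros HV. apply open_local. intros x Vx.
  destruct (tg_mul_cont G V HV (x, c) Vx) as [A [B [HA [HB [Ac [Bx HAB]]]]]].
  exists A; repeat split; auto. intros y Ay. apply (HAB y c Ay Bx).
Qed.

Lemma open_inv (G : topgroup) V : open (tg_top G) V -> open (tg_top G) (fun x => V (iv x)).
Proof. intros HV. apply (tg_inv_cont G V HV). Qed.

Lemma cont_comp {X Y Z} (tX : topology X) (tY : topology Y) (tZ : topology Z) f g :
  continuous tX tY f -> continuous tY tZ g -> continuous tX tZ (fun x => g (f x)).
Proof. intros Hf Hg V HV. apply (Hf _ (Hg V HV)). Qed.
Section Sub.
Variable G : topgroup.
Variable P : G -> Prop.
Hypothesis P1 : P e1.
Hypothesis PM : forall x y, P x -> P y -> P (x *g y).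
Hypothesis PI : forall x, P x -> P (iv x).

Definition scar := {x : G | P x}.
Definition sval (k : scar) : G := proj1_sig k.

Lemma seq (a b : scar) : sval a = sval b -> a = b.
Proof. destruct a, b; simpl; intros E; subst. f_equal; apply proof_irrelevance. Qed.

Definition sopen (U : scar -> Prop) : Prop :=
  exists V, open (tg_top G) V /\ forall k, U k <-> V (sval k).

Lemma sopen_full : sopen (fun _ => True).
Proof. exists (fun _ => True). split; [apply open_full|tauto]. Qed.
Lemma sopen_inter U V : sopen U -> sopen V -> sopen (fun x => U x /\ V x).
Proof.
  intros [U' [HU EU]] [V' [HV EV]]. exists (fun x => U' x /\ V' x). split.
  - apply open_inter; auto.
  - intros k. rewrite EU, EV. tauto.
Qed.
Lemma sopen_union (Fm : (scar -> Prop) -> Prop) :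
  (forall U, Fm U -> sopen U) -> sopen (fun x => exists U, Fm U /\ U x).
Proof.
  intros HF.
  exists (fun y => exists V, (open (tg_top G) V /\ exists U, Fm U /\ forall k, U k <-> V (sval k)) /\ V y).
  split.
  - apply open_union. intros V [? _]; auto.
  - intros k; split.
    + intros [U [FU Uk]]. destruct (HF U FU) as [V [HV EV]].
      exists V. split; [split; [auto| exists U; auto] | apply EV; auto].
    + intros [V [[HV [U [FU EU]]] Vk]]. exists U. split; auto. apply EU; auto.
Qed.

Definition stop : topology scar := @Topology scar sopen sopen_full sopen_inter sopen_union.

Definition smul (a b : scar) : scar := exist _ (sval a *g sval b) (PM _ _ (proj2_sig a) (proj2_sig b)).
Definition sinv (a : scar) : scar := exist _ (iv (sval a)) (PI _ (proj2_sig a)).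
Definition sone : scar := exist _ e1 P1.

Lemma smul_cont W : open stop W -> prod_open stop stop (fun p => W (smul (fst p) (snd p))).
Proof.
  intros [V [HV EV]] [p q] Wpq. simpl in Wpq. apply EV in Wpq. simpl in Wpq.
  destruct (tg_mul_cont G V HV (sval p, sval q) Wpq) as [A [B [HA [HB [Ap [Bq HAB]]]]]].
  exists (fun k => A (sval k)), (fun k => B (sval k)).
  split; [exists A; split; [auto| tauto]|].
  split; [exists B; split; [auto| tauto]|].
  repeat split; auto. intros x y Ax By. apply EV. apply (HAB _ _ Ax By).
Qed.

Lemma sinv_cont : continuous stop stop sinv.
Proof.
  intros U [V [HV EV]]. exists (fun x => V (iv x)). split.
  - apply open_inv; auto.
  - intros k. apply EV.
Qed.

Definition subtg : topgroup.
Proof.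
  refine (@TopGroup scar smul sinv sone stop _ _ _ _ _ smul_cont sinv_cont);
    intros; apply seq; simpl.
  - apply gA. - apply g1l. - apply g1r. - apply gVl. - apply gVr.
Defined.

Lemma subtg_val_cont : continuous (tg_top subtg) (tg_top G) sval.
Proof. intros V HV. exists V. split; auto. tauto. Qed.

End Sub.
Arguments sval {G P} k.
Arguments seq {G P} a b.
Section Cong.
Variable F : topgroup.
Variable H : F -> Prop.
Hypothesis Hop : open (tg_top F) H.
Hypothesis H1 : H e1.
Hypothesis HM : forall x y, H x -> H y -> H (x *g y).
Hypothesis HI : forall x, H x -> H (iv x).

Definition cong (a b : F) : Prop := H (a *g iv b).
Lemma cong_refl a : cong a a. Proof. unfold cong. rewrite gVr. auto. Qed.
Lemma cong_sym a b : cong a b -> cong b a.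
Proof. unfold cong. intros h. apply HI in h. rewrite inv_mul, inv_inv in h. auto. Qed.
Lemma cong_trans a b c : cong a b -> cong b c -> cong a c.
Proof. unfold cong. intros h1 h2. generalize (HM _ _ h1 h2). rewrite <- gA, gKl. auto. Qed.
Lemma cong_r a b v : cong a b -> cong (a *g v) (b *g v).
Proof. unfold cong. rewrite inv_mul, gA, gKr. auto. Qed.
Lemma cong_H a : H a -> cong a e1.
Proof. unfold cong. rewrite inv_one, g1r. auto. Qed.
Lemma cong_H' a : H a -> cong e1 a.
Proof. intros; apply cong_sym, cong_H; auto. Qed.
Lemma cong_open b : open (tg_top F) (fun a => cong a b).
Proof. apply open_rmul; auto. Qed.
End Cong.
Arguments cong {F} H a b.

Section Wr.
Variable F L : topgroup.
Variable H : F -> Prop.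
Hypothesis Hop : open (tg_top F) H.
Hypothesis H1 : H e1.
Hypothesis HM : forall x y, H x -> H y -> H (x *g y).
Hypothesis HI : forall x, H x -> H (iv x).

Definition Wcar := {p : (F -> L) * F | forall t t', cong H t t' -> fst p t = fst p t'}.
Definition wa (p : Wcar) : F -> L := fst (proj1_sig p).
Definition wv (p : Wcar) : F := snd (proj1_sig p).
Lemma wa_inv (p : Wcar) t t' : cong H t t' -> wa p t = wa p t'.
Proof. apply (proj2_sig p). Qed.

Lemma Weq (p q : Wcar) : (forall t, wa p t = wa q t) -> wv p = wv q -> p = q.
Proof.
  destruct p as [[a v] hp], q as [[b w] hq]; unfold wa, wv; simpl. intros E1 E2.
  assert (a = b) by (apply functional_extensionality; auto). subst.
  f_equal. apply proof_irrelevance.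
Qed.

Lemma Wmul_ok (p q : Wcar) : forall t t', cong H t t' ->
  (fun t => wa p t *g wa q (t *g wv p)) t = (fun t => wa p t *g wa q (t *g wv p)) t'.
Proof.
  intros t t' c. simpl. destruct p as [[a v] hp], q as [[b w] hq]; unfold wa, wv; simpl in *.
  rewrite (hp t t' c), (hq (t *g v) (t' *g v)); auto. apply cong_r; auto.
Qed.
Definition Wmul (p q : Wcar) : Wcar :=
  exist _ ((fun t => wa p t *g wa q (t *g wv p)), wv p *g wv q) (Wmul_ok p q).

Lemma Winv_ok (p : Wcar) : forall t t', cong H t t' ->
  (fun t => iv (wa p (t *g iv (wv p)))) t = (fun t => iv (wa p (t *g iv (wv p)))) t'.
Proof.
  intros t t' c. simpl. destruct p as [[a v] hp]; unfold wa, wv; simpl in *.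
  rewrite (hp (t *g iv v) (t' *g iv v)); auto. apply cong_r; auto.
Qed.
Definition Winv (p : Wcar) : Wcar :=
  exist _ ((fun t => iv (wa p (t *g iv (wv p)))), iv (wv p)) (Winv_ok p).

Lemma Wone_ok : forall t t', cong H t t' -> (fun _ : F => (e1 : L)) t = (fun _ : F => (e1 : L)) t'.
Proof. reflexivity. Qed.
Definition Wone : Wcar := exist _ ((fun _ => e1), e1) Wone_ok.

Lemma wa_mul p q t : wa (Wmul p q) t = wa p t *g wa q (t *g wv p). Proof. reflexivity. Qed.
Lemma wv_mul p q : wv (Wmul p q) = wv p *g wv q. Proof. reflexivity. Qed.
Lemma wa_Winv p t : wa (Winv p) t = iv (wa p (t *g iv (wv p))). Proof. reflexivity. Qed.
Lemma wv_inv p : wv (Winv p) = iv (wv p). Proof. reflexivity. Qed.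
Lemma wa_one t : wa Wone t = e1. Proof. reflexivity. Qed.
Lemma wv_one : wv Wone = e1. Proof. reflexivity. Qed.

Inductive basic : (Wcar -> Prop) -> Prop :=
| bF O : open (tg_top F) O -> basic (fun q => O (wv q))
| bC t V : open (tg_top L) V -> basic (fun q => V (wa q t))
| bI N1 N2 : basic N1 -> basic N2 -> basic (fun q => N1 q /\ N2 q).

Definition Wopen (U : Wcar -> Prop) : Prop :=
  forall p, U p -> exists N, basic N /\ N p /\ forall q, N q -> U q.

Lemma Wopen_full : Wopen (fun _ => True).
Proof. intros p _. exists (fun q => (fun _ => True) (wv q)). split; [apply (bF (fun _ => True)), open_full| auto]. Qed.
Lemma Wopen_inter U V : Wopen U -> Wopen V -> Wopen (fun x => U x /\ V x).
Proof.
  intros HU HV p [Up Vp]. destruct (HU p Up) as [N1 [b1 [n1 h1]]]. destruct (HV p Vp) as [N2 [b2 [n2 h2]]].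
  exists (fun q => N1 q /\ N2 q). split; [apply bI; auto|]. split; auto. intros q [? ?]; auto.
Qed.
Lemma Wopen_union (Fm : (Wcar -> Prop) -> Prop) :
  (forall U, Fm U -> Wopen U) -> Wopen (fun x => exists U, Fm U /\ U x).
Proof.
  intros HF p [U [FU Up]]. destruct (HF U FU p Up) as [N [b [n h]]].
  exists N. split; auto. split; auto. intros q Nq. exists U; auto.
Qed.
Definition Wtop : topology Wcar := @Topology Wcar Wopen Wopen_full Wopen_inter Wopen_union.

Lemma basic_open N : basic N -> Wopen N.
Proof. intros b p Np. exists N; auto. Qed.

Lemma Wmul_basic N : basic N -> forall p q, N (Wmul p q) ->
  exists N1 N2, basic N1 /\ basic N2 /\ N1 p /\ N2 q /\
    forall p' q', N1 p' -> N2 q' -> N (Wmul p' q').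
Proof.
  induction 1 as [O HO | t V HV | N1 N2 b1 IH1 b2 IH2]; intros p q Npq.
  - destruct (tg_mul_cont F O HO (wv p, wv q) Npq) as [A [B [HA [HB [Ap [Bq HAB]]]]]].
    exists (fun q => A (wv q)), (fun q => B (wv q)). repeat split; try apply bF; auto.
    intros p' q' a b. apply (HAB _ _ a b).
  - simpl in Npq.
    destruct (tg_mul_cont L V HV (wa p t, wa q (t *g wv p)) Npq) as [A [B [HA [HB [Ap [Bq HAB]]]]]].
    exists (fun r => (fun r => A (wa r t)) r /\ (fun r => (fun v' => cong H (t *g v') (t *g wv p)) (wv r)) r),
           (fun r => B (wa r (t *g wv p))).
    split; [apply bI; [apply bC; auto| apply (bF (fun v' => cong H (t *g v') (t *g wv p)))]|].
    { apply (open_lmul F t (fun y => cong H y (t *g wv p))). apply cong_open; auto. }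
    split; [apply bC; auto|].
    split; [split; auto; apply cong_refl; auto|].
    split; auto.
    intros p' q' [a c] b. simpl.
    change (V (wa p' t *g wa q' (t *g wv p'))). rewrite (wa_inv q' _ _ c). apply (HAB _ _ a b).
  - destruct Npq as [n1 n2].
    destruct (IH1 p q n1) as [A1 [B1 [a1 [b1' [c1 [d1 h1]]]]]].
    destruct (IH2 p q n2) as [A2 [B2 [a2 [b2' [c2 [d2 h2]]]]]].
    exists (fun r => A1 r /\ A2 r), (fun r => B1 r /\ B2 r).
    repeat split; try apply bI; auto.
    + apply h1; tauto. + apply h2; tauto.
Qed.

Lemma Winv_basic N : basic N -> forall p, N (Winv p) ->
  exists N', basic N' /\ N' p /\ forall p', N' p' -> N (Winv p').
Proof.
  induction 1 as [O HO | t V HV | N1 N2 b1 IH1 b2 IH2]; intros p Np.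
  - exists (fun q => (fun x => O (iv x)) (wv q)). split; [apply (bF (fun x => O (iv x))), open_inv; auto| auto].
  - simpl in Np.
    exists (fun r => (fun r => (fun y => V (iv y)) (wa r (t *g iv (wv p)))) r /\
                  (fun r => (fun v' => cong H (t *g iv v') (t *g iv (wv p))) (wv r)) r).
    split; [apply bI; [apply (bC (t *g iv (wv p)) (fun y => V (iv y))), open_inv; auto| apply (bF (fun v' => cong H (t *g iv v') (t *g iv (wv p))))]|].
    { apply (open_inv F (fun x => cong H (t *g x) (t *g iv (wv p)))).
      apply (open_lmul F t (fun y => cong H y (t *g iv (wv p)))). apply cong_open; auto. }
    split; [split; auto; apply cong_refl; auto|].
    intros p' [a c]. change (V (iv (wa p' (t *g iv (wv p'))))).
    rewrite (wa_inv p' _ _ c). auto.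
  - destruct Np as [n1 n2].
    destruct (IH1 p n1) as [A1 [a1 [c1 h1]]].
    destruct (IH2 p n2) as [A2 [a2 [c2 h2]]].
    exists (fun r => A1 r /\ A2 r). repeat split; try apply bI; auto.
    + apply h1; tauto. + apply h2; tauto.
Qed.

Lemma Wmul_cont W : Wopen W -> prod_open Wtop Wtop (fun p => W (Wmul (fst p) (snd p))).
Proof.
  intros HW [p q] Wpq. simpl in Wpq. destruct (HW _ Wpq) as [N [b [Np hN]]].
  destruct (Wmul_basic N b p q Np) as [N1 [N2 [b1 [b2 [n1 [n2 h]]]]]].
  exists N1, N2. refine (conj (basic_open _ b1) (conj (basic_open _ b2) (conj n1 (conj n2 _)))).
  intros x y a c. apply hN, h; auto.
Qed.

Lemma Winv_cont : continuous Wtop Wtop Winv.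
Proof.
  intros U HU p Up. destruct (HU _ Up) as [N [b [Np hN]]].
  destruct (Winv_basic N b p Np) as [N' [b' [n' h]]].
  exists N'. repeat split; auto.
Qed.

Definition Wtg : topgroup.
Proof.
  refine (@TopGroup Wcar Wmul Winv Wone Wtop _ _ _ _ _ Wmul_cont Winv_cont);
    intros; apply Weq; intros;
    rewrite ?wa_mul, ?wv_mul, ?wa_Winv, ?wv_inv, ?wa_one, ?wv_one, ?wa_mul, ?wv_mul.
  - rewrite !gA. reflexivity.
  - apply gA.
  - rewrite g1l, g1r. reflexivity.
  - apply g1l.
  - rewrite !g1r. reflexivity.
  - apply g1r.
  - apply gVl.
  - apply gVl.
  - rewrite gKr. apply gVr.
  - apply gVr.
Defined.
End Wr.
Definition univ_prop (X : Type) (tX : topology X) (x0 : X) (F : topgroup) (sigma : X -> F) :=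
  forall (K : topgroup) (f : X -> K),
    continuous tX (tg_top K) f -> f x0 = tg_one K ->
    exists g : F -> K,
      is_hom F K g /\ continuous (tg_top F) (tg_top K) g /\
      (forall x, g (sigma x) = f x) /\
      (forall g' : F -> K, is_hom F K g' -> continuous (tg_top F) (tg_top K) g' ->
         (forall x, g' (sigma x) = f x) -> forall y, g' y = g y).

Lemma hom_one (G K : topgroup) (g : G -> K) : is_hom G K g -> g e1 = e1.
Proof. intros h. apply idem_one. rewrite <- h, g1l. reflexivity. Qed.
Lemma hom_inv (G K : topgroup) (g : G -> K) : is_hom G K g -> forall a, g (iv a) = iv (g a).
Proof. intros h a. apply inv_uniq. rewrite <- h, gVr. apply hom_one; auto. Qed.

Lemma mychoice {A B : Type} (R : A -> B -> Prop) : (forall a, exists b, R a b) -> exists f, forall a, R a (f a).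
Proof.
  intros h. exists (fun a => proj1_sig (constructive_indefinite_description _ (h a))).
  intros a. apply (proj2_sig (constructive_indefinite_description _ (h a))).
Qed.

Lemma least_nat (P : nat -> Prop) : (exists n, P n) -> exists n, P n /\ forall m, P m -> n <= m.
Proof.
  intros [n Pn]. apply NNPP. intros Hno.
  assert (forall k, forall m, m <= k -> ~ P m).
  { induction k; intros m hm Pm.
    - apply Hno. exists m. split; auto. intros; lia.
    - destruct (Nat.eq_dec m (S k)); [subst|apply (IHk m); auto; lia].
      apply Hno. exists (S k). split; auto. intros m' Pm'.
      destruct (le_lt_dec (S k) m'); auto. exfalso. apply (IHk m'); auto; lia. }
  apply (H n n); auto.
Qed.

Section Gen.
Variable X : Type.
Variable tX : topology X.
Variable x0 : X.
Variable F : topgroup.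
Variable sigma : X -> F.
Hypothesis sc : continuous tX (tg_top F) sigma.
Hypothesis s0 : sigma x0 = e1.
Hypothesis Hu : univ_prop X tX x0 F sigma.

Definition sx (x : X) (b : bool) : F := if b then sigma x else iv (sigma x).

Inductive genn : nat -> F -> Prop :=
| gn0 : genn 0 e1
| gnS n u x b : genn n u -> genn (S n) (u *g sx x b).

Lemma genn_mul m v : genn m v -> forall n u, genn n u -> genn (n + m) (u *g v).
Proof.
  induction 1 as [| m v x b hv IH]; intros n u hu.
  - rewrite g1r, Nat.add_0_r. auto.
  - rewrite Nat.add_succ_r, gA. constructor. auto.
Qed.

Lemma genn_inv n v : genn n v -> genn n (iv v).
Proof.
  induction 1 as [| n u x b hu IH].
  - rewrite inv_one. constructor.
  - rewrite inv_mul. replace (S n) with (1 + n) by lia. apply genn_mul; auto.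
    replace (iv (sx x b)) with (e1 *g sx x (negb b)).
    + constructor. constructor.
    + rewrite g1l. destruct b; simpl; auto. rewrite inv_inv. auto.
Qed.

Lemma id_unique (phi : F -> F) : is_hom F F phi -> continuous (tg_top F) (tg_top F) phi ->
  (forall x, phi (sigma x) = sigma x) -> forall y, phi y = y.
Proof.
  intros h c e. destruct (Hu F sigma sc s0) as [g0 [_ [_ [_ U]]]].
  intros y. rewrite (U phi h c e y). symmetry. apply (U (fun z => z)); auto.
  - intros a b; auto.
  - intros V HV; auto.
Qed.

Lemma all_gen : forall g, exists n, genn n g.
Proof.
  set (S := fun g => exists n, genn n g).
  assert (S1 : S e1) by (exists 0; constructor).
  assert (SM : forall a b, S a -> S b -> S (a *g b)).
  { intros a b [n ha] [m hb]. exists (n + m). apply genn_mul; auto. }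
  assert (SI : forall a, S a -> S (iv a)).
  { intros a [n ha]. exists n. apply genn_inv; auto. }
  set (K := subtg F S S1 SM SI).
  assert (Sx : forall x, S (sigma x)).
  { intros x. exists 1. rewrite <- (g1l _ (sigma x)). apply (gnS 0 e1 x true). constructor. }
  set (f := fun x => (exist _ (sigma x) (Sx x) : K)).
  assert (fc : continuous tX (tg_top K) f).
  { intros U [V [HV EV]]. apply (open_ext tX (fun x => V (sigma x))).
    - intros x. symmetry. apply EV.
    - apply sc; auto. }
  assert (f0 : f x0 = e1).
  { apply seq. simpl. auto. }
  destruct (Hu K f fc f0) as [g [gh [gc [ge _]]]].
  assert (E : forall y, sval (g y) = y).
  { apply id_unique.
    - intros a b. rewrite gh. reflexivity.
    - apply (cont_comp _ _ _ g sval gc). apply subtg_val_cont.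
    - intros x. rewrite ge. reflexivity. }
  intros y. rewrite <- (E y). apply (proj2_sig (g y)).
Qed.
End Gen.
Section Sch.
Variable X : Type.
Variable x0 : X.
Variable F : topgroup.
Variable sigma : X -> F.
Variable H : F -> Prop.
Hypothesis H1 : H e1.
Hypothesis HM : forall x y, H x -> H y -> H (x *g y).
Hypothesis HI : forall x, H x -> H (iv x).
Hypothesis allgen : forall g, exists n, genn X F sigma n g.

Inductive sch (s : F -> F) : F -> Prop :=
| sch0 : sch s e1
| sch1 u x : sch s u -> s u = u -> s (u *g sigma x) = u *g sigma x -> sch s (u *g sigma x)
| sch2 u x : sch s u -> s u = u -> s (u *g iv (sigma x)) = u *g iv (sigma x) ->
    sch s (u *g iv (sigma x)).

Fixpoint rep (canon : F -> F) (par : F -> F * (X * bool)) (n : nat) (g : F) : F :=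
  match n with
  | 0 => e1
  | S m => rep canon par m (canon (fst (par g))) *g sx X F sigma (fst (snd (par g))) (snd (snd (par g)))
  end.

Definition Dn n g := exists u, genn X F sigma n u /\ cong H u g.

Lemma Dn_inv n g g' : cong H g g' -> Dn n g -> Dn n g'.
Proof. intros c [u [h c']]. exists u. split; auto. eapply cong_trans; eauto. Qed.

Lemma schreier_exists : exists s : F -> F,
  (forall g, cong H (s g) g) /\ (forall g g', cong H g g' -> s g = s g') /\ s e1 = e1 /\
  (forall g, sch s (s g)).
Proof.
  destruct (mychoice (fun g n => Dn n g /\ forall m, Dn m g -> n <= m)) as [dep hdep].
  { intros g. apply least_nat. destruct (allgen g) as [n hn]. exists n, g. split; auto. apply cong_refl; auto. }
  assert (dep_inv : forall g g', cong H g g' -> dep g = dep g').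
  { intros g g' c. destruct (hdep g) as [d1 m1]. destruct (hdep g') as [d2 m2].
    apply Nat.le_antisymm; [apply m1 | apply m2].
    - apply (Dn_inv _ g'); auto. apply cong_sym; auto.
    - apply (Dn_inv _ g); auto. }
  destruct (mychoice (fun (C : F -> Prop) (c : F) => (exists g, C g) -> C c)) as [pick hpick].
  { intros C. destruct (classic (exists g, C g)) as [[g Cg]|n].
    - exists g. auto.
    - exists e1. intros h; contradiction. }
  set (canon := fun g => pick (fun y => cong H y g)).
  assert (canon_c : forall g, cong H (canon g) g).
  { intros g. apply (hpick (fun y => cong H y g)). exists g. apply cong_refl; auto. }
  assert (canon_inv : forall g g', cong H g g' -> canon g = canon g').
  { intros g g' c. unfold canon. f_equal. apply functional_extensionality. intros y.
    apply propositional_extensionality. split; intros h.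
    - eapply cong_trans; eauto.
    - eapply cong_trans; eauto. apply cong_sym; auto. }
  destruct (mychoice (fun g (p : F * (X * bool)) => forall m, dep g = S m ->
      dep (fst p) = m /\ cong H (fst p *g sx X F sigma (fst (snd p)) (snd (snd p))) g)) as [par hpar].
  { intros g. destruct (dep g) as [|m] eqn:E.
    - exists (e1, (x0, true)). intros m h; discriminate.
    - destruct (hdep g) as [[u [hu cu]] hmin]. rewrite E in hu.
      inversion hu as [|m' u' x b hu' Em Eu]; subst.
      exists (u', (x, b)). intros m2 h2. injection h2 as <-. simpl. split; auto.
      destruct (hdep u') as [du' mu'].
      apply Nat.le_antisymm.
      + apply mu'. exists u'. split; auto. apply cong_refl; auto.
      + destruct du' as [v [hv cv]].
        assert (S (dep u') >= S m); [|lia].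
        rewrite <- E. apply hmin. exists (v *g sx X F sigma x b). split.
        * constructor; auto.
        * eapply cong_trans; eauto. apply cong_r; auto. }
  set (s := fun g => rep canon par (dep g) (canon g)).
  assert (s_inv : forall g g', cong H g g' -> s g = s g').
  { intros g g' c. unfold s. rewrite (dep_inv g g' c), (canon_inv g g' c). reflexivity. }
  assert (main : forall n g, dep g = n -> cong H (s g) g /\ sch s (s g)).
  { induction n as [|m IH]; intros g Eg.
    - unfold s. rewrite Eg. simpl. split; [|constructor].
      destruct (hdep g) as [[u [hu cu]] _]. rewrite Eg in hu. inversion hu; subst. auto.
    - set (g1 := canon g).
      assert (E1 : dep g1 = S m) by (rewrite <- Eg; apply dep_inv, canon_c).
      destruct (hpar g1 m E1) as [Ep cp].
      destruct (par g1) as [g' [x b]] eqn:Epar. simpl in Ep, cp.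
      assert (Es : s g = s g' *g sx X F sigma x b).
      { unfold s at 1. rewrite Eg. simpl. fold g1. rewrite Epar. simpl.
        unfold s. rewrite Ep. reflexivity. }
      destruct (IH g' Ep) as [c' sc'].
      assert (ss' : s (s g') = s g') by (apply s_inv; auto).
      assert (cg : cong H (s g) g).
      { rewrite Es. apply (cong_trans F H HM _ (g' *g sx X F sigma x b)); [apply cong_r; auto|].
        apply (cong_trans F H HM _ g1); auto. apply canon_c. }
      split; auto.
      assert (ssg : s (s g) = s g) by (apply s_inv; auto).
      rewrite Es in *. destruct b; simpl in *.
      + apply sch1; auto.
      + apply sch2; auto. }
  exists s. split; [intros g; apply (main _ g eq_refl)|].
  split; auto. split.
  - destruct (hdep e1) as [_ m0]. assert (dep e1 = 0).
    { assert (dep e1 <= 0); [|lia]. apply m0. exists e1. split; [constructor| apply cong_refl; auto]. }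
    unfold s. rewrite H0. reflexivity.
  - intros g. apply (main _ g eq_refl).
Qed.
End Sch.
Section Main.
Variable X : Type.
Variable tX : topology X.
Variable x0 : X.
Variable F : topgroup.
Variable sigma : X -> F.
Hypothesis sc : continuous tX (tg_top F) sigma.
Hypothesis s0 : sigma x0 = e1.
Hypothesis Hu : univ_prop X tX x0 F sigma.
Variable H : F -> Prop.
Hypothesis Hop : open (tg_top F) H.
Hypothesis H1 : H e1.
Hypothesis HM : forall x y, H x -> H y -> H (x *g y).
Hypothesis HI : forall x, H x -> H (iv x).
Variable s : F -> F.
Hypothesis s_c : forall g, cong H (s g) g.
Hypothesis s_inv : forall g g', cong H g g' -> s g = s g'.
Hypothesis s_one : s e1 = e1.
Hypothesis s_sch : forall g, sch X F sigma s (s g).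

Lemma ss u : s (s u) = s u. Proof. apply s_inv, s_c. Qed.
Lemma s_r u v : s (s u *g v) = s (u *g v). Proof. apply s_inv, cong_r, s_c. Qed.

Definition coll (v : F) (x : X) : Prop := v *g sigma x = s (v *g sigma x).
Definition Zpt := {p : F * X | s (fst p) = fst p /\ ~ coll (fst p) (snd p)}.
Definition Zcar := option Zpt.

Definition q (u : F) (x : X) : Zcar :=
  match excluded_middle_informative (coll (s u) x) with
  | left _ => None
  | right n => Some (exist _ (s u, x) (conj (ss u) n))
  end.

Lemma q_none u x : coll (s u) x -> q u x = None.
Proof. intros c. unfold q. destruct (excluded_middle_informative (coll (s u) x)); auto. contradiction. Qed.

Lemma q_some u x (p : Zpt) : proj1_sig p = (s u, x) -> q u x = Some p.
Proof.
  intros E. unfold q. destruct p as [[v y] [h1 h2]]. simpl in E. injection E as -> ->.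
  destruct (excluded_middle_informative (coll (s u) x)) as [c|n].
  - contradiction.
  - f_equal. f_equal. apply proof_irrelevance.
Qed.

Lemma q_inv u u' x : cong H u u' -> q u x = q u' x.
Proof.
  intros c. assert (E : s u = s u') by (apply s_inv; auto).
  destruct (classic (coll (s u) x)) as [h|n].
  - rewrite !q_none; auto. rewrite <- E; auto.
  - rewrite (q_some u x (exist _ (s u, x) (conj (ss u) n))); auto.
    symmetry. apply q_some. simpl. rewrite E. auto.
Qed.

Definition Zopen (U : Zcar -> Prop) : Prop := forall u, open tX (fun x => U (q u x)).
Lemma Zopen_full : Zopen (fun _ => True).
Proof. intros u. apply open_full. Qed.
Lemma Zopen_inter U V : Zopen U -> Zopen V -> Zopen (fun x => U x /\ V x).
Proof. intros hU hV u. apply open_inter; auto. Qed.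
Lemma Zopen_union (Fm : (Zcar -> Prop) -> Prop) :
  (forall U, Fm U -> Zopen U) -> Zopen (fun x => exists U, Fm U /\ U x).
Proof.
  intros hF u.
  apply (open_ext tX (fun x => exists O, (exists U, Fm U /\ O = (fun y => U (q u y))) /\ O x)).
  - intros x; split.
    + intros [O [[U [FU ->]] Ox]]. exists U; auto.
    + intros [U [FU Ux]]. exists (fun y => U (q u y)). split; auto. exists U; auto.
  - apply open_union. intros O [U [FU ->]]. apply hF; auto.
Qed.
Definition Ztop : topology Zcar := @Topology Zcar Zopen Zopen_full Zopen_inter Zopen_union.

Definition K : topgroup := subtg F H H1 HM HI.

Definition tau' (u : F) (x : X) : F := s u *g sigma x *g iv (s (u *g sigma x)).
Lemma tau'_H u x : H (tau' u x).
Proof.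
  change (cong H (s u *g sigma x) (s (u *g sigma x))).
  apply (cong_trans F H HM _ (u *g sigma x)).
  - apply cong_r, s_c.
  - apply cong_sym; auto.
Qed.

Definition tau (z : Zcar) : K :=
  match z with
  | None => e1
  | Some p => exist _ (tau' (fst (proj1_sig p)) (snd (proj1_sig p))) (tau'_H _ _)
  end.

Lemma tau_q u x : sval (tau (q u x)) = tau' u x.
Proof.
  destruct (classic (coll (s u) x)) as [c|n].
  - rewrite q_none; auto. simpl. unfold tau'. unfold coll in c.
    rewrite <- s_r, <- c, gVr. reflexivity.
  - rewrite (q_some u x (exist _ (s u, x) (conj (ss u) n))); auto. simpl.
    unfold tau'. rewrite ss, s_r. reflexivity.
Qed.

Lemma loc_open (a c : F) V : open (tg_top F) V ->
  open (tg_top F) (fun w => V (a *g w *g iv (s (c *g w)))).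
Proof.
  intros HV. apply open_local. intros w1 Vw1.
  exists (fun w => (fun w => cong H (c *g w) (c *g w1)) w /\ (fun w => V (a *g w *g iv (s (c *g w1)))) w).
  split; [apply open_inter|].
  - apply (open_lmul F c (fun y => cong H y (c *g w1))). apply cong_open; auto.
  - apply (open_lmul F a (fun y => V (y *g iv (s (c *g w1))))). apply open_rmul; auto.
  - split; [split; auto; apply cong_refl; auto|].
    intros w [cw Vw]. rewrite (s_inv _ _ cw). auto.
Qed.

Lemma tau_cont : continuous Ztop (tg_top K) tau.
Proof.
  intros U [V [HV EV]] u.
  apply (open_ext tX (fun x => (fun w => V (s u *g w *g iv (s (u *g w)))) (sigma x))).
  - intros x. rewrite EV, tau_q. reflexivity.
  - apply (sc _ (loc_open (s u) u V HV)).
Qed.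


Lemma elt_H t w : H (s t *g w *g iv (s (t *g w))).
Proof.
  change (cong H (s t *g w) (s (t *g w))).
  apply (cong_trans F H HM _ (t *g w)).
  - apply cong_r, s_c.
  - apply cong_sym; auto.
Qed.
Definition elt (t w : F) : K := exist _ (s t *g w *g iv (s (t *g w))) (elt_H t w).

Lemma K_univ (L : topgroup) (f : Zcar -> L) :
  continuous Ztop (tg_top L) f -> f None = e1 ->
  exists g : K -> L,
    is_hom K L g /\ continuous (tg_top K) (tg_top L) g /\
    (forall z, g (tau z) = f z) /\
    (forall g' : K -> L, is_hom K L g' -> continuous (tg_top K) (tg_top L) g' ->
       (forall z, g' (tau z) = f z) -> forall y, g' y = g y).
Proof.
  intros fc f0.
  set (W := Wtg F L H Hop H1).
  assert (Phi_ok : forall x t t', cong H t t' ->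
     fst ((fun t => f (q t x)), sigma x) t = fst ((fun t => f (q t x)), sigma x) t').
  { intros x t t' c. simpl. rewrite (q_inv t t' x c). reflexivity. }
  set (Phi := fun x => (exist _ ((fun t => f (q t x)), sigma x) (Phi_ok x) : Wcar F L H)).
  assert (Pb : forall N, basic F L H N -> open tX (fun x => N (Phi x))).
  { induction 1 as [O HO | t V HV | N1 N2 b1 IH1 b2 IH2].
    - apply (sc O HO).
    - apply (fc V HV t).
    - apply open_inter; auto. }
  assert (Pc : continuous tX (tg_top W) Phi).
  { intros U HU. apply open_local. intros x Ux.
    destruct (HU (Phi x) Ux) as [N [b [Nx hN]]].
    exists (fun y => N (Phi y)). split; [apply Pb; auto|]. split; auto. }
  assert (P0 : Phi x0 = (e1 : W)).
  { apply Weq.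
    - intros t. change (f (q t x0) = e1). rewrite q_none; auto.
      unfold coll. rewrite s0, !g1r, ss. reflexivity.
    - apply s0. }
  destruct (Hu W Phi Pc P0) as [G [Gh [Gc [Ge Gu]]]].
  assert (Gv : forall y, wv F L H (G y) = y).
  { apply (id_unique X tX x0 F sigma sc s0 Hu (fun y => wv F L H (G y))).
    - intros a b. rewrite Gh. reflexivity.
    - intros V HV. apply (Gc (fun p => V (wv F L H p))). apply basic_open. apply bF; auto.
    - intros x. rewrite Ge. reflexivity. }
  assert (GA : forall a b t, wa F L H (G (a *g b)) t = wa F L H (G a) t *g wa F L H (G b) (t *g a)).
  { intros a b t. transitivity (wa F L H (Wmul F L H (G a) (G b)) t).
    - f_equal. apply Gh.
    - rewrite wa_mul, Gv. reflexivity. }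
  assert (GI : forall a t, wa F L H (G (iv a)) t = iv (wa F L H (G a) (t *g iv a))).
  { intros a t. transitivity (wa F L H (Winv F L H (G a)) t).
    - f_equal. apply (hom_inv F W G Gh).
    - rewrite wa_Winv, Gv. reflexivity. }
  assert (Gone : forall t, wa F L H (G e1) t = e1).
  { intros t. transitivity (wa F L H (Wone F L H) t).
    - f_equal. apply (hom_one F W G Gh).
    - reflexivity. }
  assert (GS : forall x t, wa F L H (G (sigma x)) t = f (q t x)).
  { intros x t. rewrite Ge. reflexivity. }
  assert (A : forall u, sch X F sigma s u -> wa F L H (G u) e1 = e1).
  { induction 1 as [| u x h IH su s2 | u x h IH su s2].
    - apply Gone.
    - rewrite GA, IH, g1l, GS, g1l, q_none; auto. rewrite su. unfold coll. auto.
    - rewrite GA, IH, g1l, GI, GS, q_none, f0, inv_one; auto.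
      rewrite g1l, s2. unfold coll. rewrite gKr', su. auto. }
  set (g := fun k : K => wa F L H (G (sval k)) e1).
  exists g. split; [|split; [|split]].
  - intros k1 k2. unfold g. change (sval (k1 *g k2)) with (sval k1 *g sval k2).
    rewrite GA. f_equal. apply wa_inv. rewrite g1l. apply cong_H. apply (proj2_sig k1).
  - intros V HV. exists (fun y => V (wa F L H (G y) e1)). split.
    + apply (Gc (fun p => V (wa F L H p e1))). apply basic_open. apply bC; auto.
    + intros k. unfold g. tauto.
  - intros [[[v x] [h1 h2]]|].
    + unfold g. change (sval (tau (Some (exist _ (v, x) (conj h1 h2))))) with (tau' v x).
      unfold tau'. simpl in h1, h2. rewrite GA, GA, GI.
      rewrite (A (s v) (s_sch v)), g1l, GS.
      rewrite (q_some (e1 *g s v) x (exist _ (v, x) (conj h1 h2))).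
      2: { simpl. rewrite g1l, ss, h1. reflexivity. }
      rewrite (wa_inv F L H (G (s (v *g sigma x))) _ e1).
      * rewrite A, inv_one, g1r; auto.
      * apply cong_H. rewrite g1l. apply elt_H.
    + unfold g. simpl. rewrite Gone. auto.
  - intros g' gh' gc' ge' k.
    assert (Gam_ok : forall w t t', cong H t t' ->
       fst ((fun t => g' (elt t w)), w) t = fst ((fun t => g' (elt t w)), w) t').
    { intros w t t' c. simpl. f_equal. apply seq. simpl.
      rewrite (s_inv t t' c), (s_inv (t *g w) (t' *g w)); auto. apply cong_r; auto. }
    set (Gam := fun w => (exist _ ((fun t => g' (elt t w)), w) (Gam_ok w) : Wcar F L H)).
    assert (Gamh : is_hom F W Gam).
    { intros a b. apply Weq.
      - intros t. change (g' (elt t (a *g b)) = g' (elt t a) *g g' (elt (t *g a) b)).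
        rewrite <- gh'. f_equal. apply seq. simpl.
        rewrite !gA, gKr'. reflexivity.
      - reflexivity. }
    assert (Gamb : forall N, basic F L H N -> open (tg_top F) (fun w => N (Gam w))).
    { induction 1 as [O HO | t V HV | N1 N2 b1 IH1 b2 IH2].
      - apply HO.
      - destruct (gc' V HV) as [V' [HV' EV']].
        apply (open_ext _ (fun w => V' (s t *g w *g iv (s (t *g w))))).
        + intros w. symmetry. apply (EV' (elt t w)).
        + apply loc_open; auto.
      - apply open_inter; auto. }
    assert (Gamc : continuous (tg_top F) (tg_top W) Gam).
    { intros U HU. apply open_local. intros w Uw.
      destruct (HU (Gam w) Uw) as [N [b [Nw hN]]].
      exists (fun y => N (Gam y)). split; [apply Gamb; auto|]. split; auto. }
    assert (Game : forall x, Gam (sigma x) = Phi x).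
    { intros x. apply Weq.
      - intros t. change (g' (elt t (sigma x)) = f (q t x)). rewrite <- ge'. f_equal.
        apply seq. rewrite tau_q. reflexivity.
      - reflexivity. }
    pose proof (Gu Gam Gamh Gamc Game) as E.
    unfold g. rewrite <- E. change (g' k = g' (elt e1 (sval k))). f_equal. apply seq. simpl.
    rewrite s_one, g1l, (s_inv (sval k) e1), s_one, inv_one, g1r; auto.
    apply cong_H. apply (proj2_sig k).
Qed.

End Main.
Theorem theorem1 (X : Type) (tX : topology X) (x0 : X)
  (F : topgroup) (sigma : X -> F) (Hfree : is_free_graev tX x0 F sigma)
  (H : F -> Prop) (HH : open_subgroup F H) :
  exists (Z : Type) (tZ : topology Z) (z0 : Z) (K : topgroup) (tau : Z -> K)
         (phi : K -> F),
    is_free_graev tZ z0 K tau /\ topgroup_iso_onto K F H phi.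
Proof.
  destruct Hfree as [sc [s0 Hu]].
  destruct HH as [Hop [H1 [HM HI]]].
  pose proof (all_gen X tX x0 F sigma sc s0 Hu) as AG.
  destruct (schreier_exists X x0 F sigma H H1 HM HI AG) as [s [s_c [s_inv [s_one s_sch]]]].
  exists (Zcar X F sigma s), (Ztop X tX F sigma H s s_c s_inv), None, (K F H H1 HM HI),
    (tau X F sigma H H1 HM HI s s_c), sval.
  split; [split; [|split]|].
  - apply (tau_cont X tX F sigma sc H Hop H1 HM HI s s_c s_inv).
  - reflexivity.
  - intros L f fc f0. apply (K_univ X tX x0 F sigma sc s0 Hu H Hop H1 HM HI s s_c s_inv s_one s_sch L f fc f0).
  - split; [|split; [|split; [|split]]].
    + intros a b. reflexivity.
    + intros a b E. apply seq. auto.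
    + intros y; split.
      * intros hy. exists (exist _ y hy). reflexivity.
      * intros [k <-]. apply (proj2_sig k).
    + apply subtg_val_cont.
    + intros U HU. exact HU.
Qed.
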